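(* Let $(G_n)$ be a sequence of finite connected $d$-regular graphs ($d\geq3$) that is asymptotically embeddable into Hilbert space, and let $X$ be the associated coarse model space. Then $X$ has the boundary Haagerup property.
   Context: Graphs are undirected with no loops or parallel edges; $d_G$ is the edge metric. The coarse model space $X$ associated to $(G_n)$ with vertex sets $V_n$ is $\bigsqcup_n V_n$ with the metric equal to $d_{G_n}$ on each $V_n$ and $\infty$ between distinct $V_n$. $(G_n)$ is asymptotically embeddable into Hilbert space if there exist non-decreasing $\rho_-,\rho_+:\mathbb{R}_+\to\mathbb{R}_+$ tending to infinity, kernels $K_n:V_n\times V_n\to\mathbb{R}_+$ and $R_n\ge0$ with $R_n\to\infty$ such that $K_n$ is symmetric with $K_n(x,x)=0$, $\rho_-(d_{G_n}(x,y))\le K_n(x,y)\le\rho_+(d_{G_n}(x,y))$, and $\sum_{i,j}z_i\overline{z_j}K_n(x_i,x_j)\le0$ for every $\{x_1,\dots,x_m\}\subseteq V_n$ of diameter at most $R_n$ and $z_i\in\mathbb{C}$ with $\sum z_i=0$. Let $\beta X$ be the Stone–Čech compactification of $X$ (as a discrete space) and $\partial X=\beta X\setminus X$. For $r>0$ let $E_r=\{(x,y)\in X\times X: d(x,y)\le r\}$, $\overline{E_r}$ its closure in $\beta X\times\beta X$, and $F_r=\overline{E_r}\cap(\partial X\times\partial X)$. Let $G_\infty(X)=\bigcup_{r\in\mathbb{N}}F_r$ with the topology in which $U$ is open iff $U\cap F_r$ is open in $F_r$ for all $r$. $X$ has the boundary Haagerup property if there is a continuous proper function $h:G_\infty(X)\to\mathbb{R}_+$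 with $h(\omega,\omega)=0$ for $\omega\in\partial X$, $h(\omega,\eta)=h(\eta,\omega)$, and $\sum_{i,j}z_i\overline{z_j}h(\omega_i,\omega_j)\le0$ for every finite $\{\omega_1,\dots,\omega_m\}\subseteq\partial X$ with all $(\omega_i,\omega_j)\in G_\infty(X)$ and $z_i\in\mathbb{C}$ with $\sum z_i=0$. *)

(* Defs.v *)
From HB Require Import structures.
From mathcomp Require Import all_boot all_order all_algebra.
From mathcomp Require Import all_classical all_reals all_analysis.
From mathcomp Require Import Rstruct Rstruct_topology.
From mathcomp Require Import complex.
Import ComplexField.

Set Implicit Arguments.
Unset Strict Implicit.
Unset Printing Implicit Defensive.
Import Order.TTheory GRing.Theory Num.Theory.
Local Open Scope classical_set_scope.
Local Open Scope ring_scope.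

Notation RR := Rdefinitions.R.

Section Graphs.
Variables (V : finType) (adj : rel V).

Definition simple_graph : Prop := symmetric adj /\ irreflexive adj.

Definition regular_graph (d : nat) : Prop :=
  forall v : V, #|[set w | adj v w]| = d.

(* connected (and, by convention, nonempty) *)
Definition connected_graph : Prop :=
  (0 < #|V|)%N /\ forall x y : V, connect adj x y.

Definition walk (x y : V) (k : nat) : Prop :=
  exists p : seq V, [/\ path adj x p, last x p = y & size p = k].

Lemma walk_exb (x y : V) :
  (exists k, walk x y k) -> exists k, (fun k => `[< walk x y k >]) k.
Proof. by case=> k h; exists k; apply/asboolP. Qed.

(* edge metric d_G: length of a shortest walk (0 if none exists; never
   used for connected graphs) *)
Definition gdist (x y : V) : nat :=
  match pselect (exists k, walk x y k) with
  | left H => ex_minn (walk_exb H)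
  | right _ => 0%N
  end.

End Graphs.

Section CoarseSpace.
Variables (V : nat -> finType) (adj : forall n, rel (V n)).

Definition nondecr_to_infty (rho : RR -> RR) : Prop :=
  [/\ (forall t, 0 <= t -> 0 <= rho t),
      (forall s t, 0 <= s -> s <= t -> rho s <= rho t)
    & (forall M : RR, exists T : RR, forall t, T <= t -> M <= rho t)].

Definition asymp_embeddable : Prop :=
  exists (rhom rhop : RR -> RR) (K : forall n, V n -> V n -> RR)
         (Rn : nat -> RR),
  nondecr_to_infty rhom /\ nondecr_to_infty rhop /\
  (forall n, 0 <= Rn n) /\
  (forall M : RR, exists N, forall n, (N <= n)%N -> M <= Rn n) /\
  (forall n (x y : V n), 0 <= K n x y /\ K n x y = K n y x) /\
  (forall n (x : V n), K n x x = 0) /\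
  (forall n (x y : V n),
      rhom (gdist (@adj n) x y)%:R <= K n x y /\
      K n x y <= rhop (gdist (@adj n) x y)%:R) /\
  (forall n (m : nat) (x : 'I_m -> V n) (z : 'I_m -> complex RR),
      injective x ->
      (forall i j, (gdist (@adj n) (x i) (x j))%:R <= Rn n) ->
      \sum_(i < m) z i = 0 ->
      \sum_(i < m) \sum_(j < m)
          z i * conjc (z j) * real_complex RR (K n (x i) (x j)) <= 0).

(* the coarse model space X = disjoint union of the V n *)
Definition cspace : Type := {n : nat & V n}.

(* E_r = {(x,y) : d(x,y) <= r}; points of distinct components are at
   distance infinity *)
Definition Er (r : nat) : set (cspace * cspace) :=
  fun ab => exists n (x y : V n),
    [/\ ab.1 = existT _ n x, ab.2 = existT _ n y & (gdist (@adj n) x y <= r)%N].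

(* Stone-Cech compactification beta X of the discrete space X: the
   ultrafilters on X, with basic open sets [set w | w A], A : set X.
   X embeds in beta X via principal ultrafilters. *)
Definition ultrafilter (w : set_system cspace) : Prop :=
  inhabited (UltraFilter w).

Definition boundary (w : set_system cspace) : Prop :=
  ultrafilter w /\ forall x : cspace, w <> principal_filter x.

Definition pt := (set_system cspace * set_system cspace)%type.

(* closure in beta X x beta X (product topology, basis of products of
   basic open sets) of a set S of points *)
Definition bclosure (S : set pt) : set pt :=
  fun p => ultrafilter p.1 /\ ultrafilter p.2 /\
    forall A B : set cspace, p.1 A -> p.2 B ->
      exists q, [/\ S q, q.1 A & q.2 B].

Definition Er_beta (r : nat) : set pt :=
  [set (principal_filter ab.1, principal_filter ab.2) | ab in Er r].

Definition Fr (r : nat) : set pt :=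
  fun p => bclosure (Er_beta r) p /\ boundary p.1 /\ boundary p.2.

Definition Ginf : set pt := \bigcup_(r in [set: nat]) Fr r.

Definition rel_open (Y U : set pt) : Prop :=
  U `<=` Y /\
  forall p, U p -> exists A B : set cspace,
    [/\ p.1 A, p.2 B & forall q, Y q -> q.1 A -> q.2 B -> U q].

(* the inductive limit topology on G_oo(X) *)
Definition Ginf_open (U : set pt) : Prop :=
  U `<=` Ginf /\ forall r : nat, rel_open (Fr r) (U `&` Fr r).

Definition Ginf_compact (S : set pt) : Prop :=
  S `<=` Ginf /\
  forall (I : Type) (U : I -> set pt),
    (forall i, Ginf_open (U i)) -> S `<=` \bigcup_(i in [set: I]) U i ->
    exists s : seq I, S `<=` \bigcup_(i in [set i | List.In i s]) U i.

Definition Ginf_continuous (h : pt -> RR) : Prop :=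
  forall O : set RR, open O -> Ginf_open (Ginf `&` h @^-1` O).

Definition Ginf_proper (h : pt -> RR) : Prop :=
  forall C : set RR, compact C -> Ginf_compact (Ginf `&` h @^-1` C).

Definition boundary_haagerup : Prop :=
  exists h : pt -> RR,
  (forall p, Ginf p -> 0 <= h p) /\
  Ginf_continuous h /\
  Ginf_proper h /\
  (forall w, boundary w -> h (w, w) = 0) /\
  (forall w e, Ginf (w, e) -> h (w, e) = h (e, w)) /\
  (forall (m : nat) (om : 'I_m -> set_system cspace)
          (z : 'I_m -> complex RR),
      injective om ->
      (forall i, boundary (om i)) ->
      (forall i j, Ginf (om i, om j)) ->
      \sum_(i < m) z i = 0 ->
      \sum_(i < m) \sum_(j < m)
          z i * conjc (z j) * real_complex RR (h (om i, om j)) <= 0).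

End CoarseSpace.

(* Main.v *)
Require Import Defs.
From HB Require Import structures.
From mathcomp Require Import all_boot all_order all_algebra.
From mathcomp Require Import all_classical all_reals all_analysis.
From mathcomp Require Import Rstruct Rstruct_topology complex.
From mathcomp Require Import ring lra.
Import ComplexField.
Set Implicit Arguments.
Unset Strict Implicit.
Unset Printing Implicit Defensive.
Import Order.TTheory GRing.Theory Num.Theory.
Local Open Scope classical_set_scope.
Local Open Scope ring_scope.

Section GraphFacts.
Variables (T : finType) (e : rel T).

Definition step (i : nat) (x : T) : T := nth x (enum [set y | e x y]) i.

Fixpoint run (w : seq nat) (x : T) : T :=
  if w is i :: w' then run w' (step i x) else x.

Lemma run_cat w1 w2 x : run (w1 ++ w2) x = run w2 (run w1 x).
Proof. by elim: w1 x => //= i w IH x; rewrite IH. Qed.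

Lemma step_adj i x : step i x != x -> e x (step i x).
Proof.
rewrite /step => H.
have Hi : (i < size (enum [set y | e x y]))%N.
  by rewrite ltnNge; apply: contra H => H'; rewrite nth_default.
by have := mem_nth x Hi; rewrite mem_enum inE.
Qed.

Lemma walk_run w x : exists p, [/\ path e x p, last x p = run w x & (size p <= size w)%N].
Proof.
elim: w x => [|i w IH] x /=; first by exists [::].
have [p [P1 P2 P3]] := IH (step i x).
have [Heq|Hne] := eqVneq (step i x) x.
  exists p; rewrite Heq in P1 P2; split => //; [by rewrite Heq|exact: leqW].
exists (step i x :: p); split => //=.
by rewrite step_adj.
Qed.

Lemma gdist_le x y k : walk e x y k -> (gdist e x y <= k)%N.
Proof.
move=> Hw; rewrite /gdist; case: pselect => [H|H]; last by exfalso; apply: H; exists k.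
case: ex_minnP => m _; apply; exact/asboolP.
Qed.

Lemma gdist_walk x y : (exists k, walk e x y k) -> walk e x y (gdist e x y).
Proof.
move=> H0; rewrite /gdist; case: pselect => [H|//].
by case: ex_minnP => m /asboolP.
Qed.

Lemma walk_le_gdist x y p : path e x p -> last x p = y -> (gdist e x y <= size p)%N.
Proof. by move=> P1 P2; apply: gdist_le; exists p. Qed.

Lemma run_dist w x : (gdist e x (run w x) <= size w)%N.
Proof.
have [p [P1 P2 P3]] := walk_run w x.
exact: leq_trans (walk_le_gdist P1 P2) P3.
Qed.

Variable d : nat.
Hypothesis reg : forall v : T, #|[set w | e v w]| = d.

Lemma step_out x j : (d <= j)%N -> step j x = x.
Proof. by move=> H; rewrite /step nth_default // -cardE reg. Qed.

Lemma run_out x k : run (nseq k d) x = x.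
Proof. by elim: k x => //= k IH x; rewrite step_out // IH. Qed.

Lemma word_of_path x p : path e x p ->
  exists w : seq nat, [/\ size w = size p, all (fun i => i < d)%N w & run w x = last x p].
Proof.
elim: p x => [|y p IH] x /=; first by exists [::].
move=> /andP[Hxy Hp]; have [w [W1 W2 W3]] := IH y Hp.
have Hy : y \in enum [set z | e x z] by rewrite mem_enum inE.
exists (index y (enum [set z | e x z]) :: w); split => /=.
- by rewrite W1.
- by rewrite W2 andbT -(reg x) cardE index_mem.
- by rewrite /step nth_index.
Qed.

Definition wv (r : nat) (t : r.-tuple 'I_d.+1) : seq nat := map val t.

Lemma size_wv r (t : r.-tuple 'I_d.+1) : size (wv t) = r.
Proof. by rewrite size_map size_tuple. Qed.

Lemma close_word r x y : (exists k, walk e x y k) -> (gdist e x y <= r)%N ->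
  exists t : r.-tuple 'I_d.+1, run (wv t) x = y.
Proof.
move=> /gdist_walk [p [P1 P2 P3]] Hr.
have [w [W1 W2 W3]] := word_of_path P1.
set s : seq 'I_d.+1 := map inord w ++ nseq (r - size w) ord_max.
have Hs : size s == r by rewrite size_cat size_nseq size_map subnKC // W1 P3.
exists (Tuple Hs); rewrite /wv /= map_cat -map_comp map_nseq /=.
have -> : [seq (nat_of_ord (n:=d.+1) \o inord) i | i <- w] = w.
  rewrite -{2}(map_id w); apply/eq_in_map => i /(allP W2) Hi /=.
  by rewrite inordK // ltnW.
by rewrite run_cat run_out W3.
Qed.


Hypothesis esym : symmetric e.
Hypothesis econn : forall x y : T, connect e x y.

Lemma walk_ex x y : exists k, walk e x y k.
Proof. by have /connectP [p P1 P2] := econn x y; exists (size p), p; split. Qed.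

Lemma walk_rev x y k : walk e x y k -> walk e y x k.
Proof.
move=> [p [P1 P2 P3]]; exists (rev (belast x p)); split.
- rewrite -P2 rev_path; congr (path _ x p): P1.
  by apply/funext => a; apply/funext => b; rewrite /= esym.
- rewrite -P2; case: (p) => //= a q; by rewrite rev_cons last_rcons.
- by rewrite size_rev size_belast.
Qed.

Lemma gdist_sym x y : gdist e x y = gdist e y x.
Proof.
apply/eqP; rewrite eqn_leq; apply/andP; split; apply: gdist_le; apply: walk_rev;
  apply: gdist_walk; exact: walk_ex.
Qed.

Lemma gdist_tri x y z : (gdist e x z <= gdist e x y + gdist e y z)%N.
Proof.
have [p [P1 P2 P3]] := gdist_walk (walk_ex x y).
have [q [Q1 Q2 Q3]] := gdist_walk (walk_ex y z).
apply: gdist_le; exists (p ++ q); split.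
- by rewrite cat_path P1 P2 Q1.
- by rewrite last_cat P2 Q2.
- by rewrite size_cat P3 Q3.
Qed.

Lemma close_word' r x y : (gdist e x y <= r)%N ->
  exists t : r.-tuple 'I_d.+1, run (wv t) x = y.
Proof. by apply: close_word; exact: walk_ex. Qed.

Definition crel (R : nat) : rel T := fun x y => (x != y) && (gdist e x y <= R)%N.

Lemma crel_sym R : symmetric (crel R).
Proof. by move=> x y; rewrite /crel eq_sym gdist_sym. Qed.

Lemma crel_deg R x : (#|[set y | crel R x y]%SET| <= #|{: R.-tuple 'I_d.+1}|)%N.
Proof.
apply: (@leq_trans #|(fun t : R.-tuple 'I_d.+1 => run (wv t) x) @: [set: R.-tuple 'I_d.+1]%SET|);
  last by have := leq_imset_card (fun t : R.-tuple 'I_d.+1 => run (wv t) x) [set: R.-tuple 'I_d.+1]%SET; rewrite cardsT.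
apply: subset_leq_card; apply/fintype.subsetP => y; rewrite inE => /andP[_ Hy].
have [t Ht] := close_word' Hy.
by apply/imsetP; exists t; rewrite ?inE.
Qed.

End GraphFacts.

Lemma coloring (T : finType) (e : rel T) (D : nat) :
  symmetric e -> irreflexive e -> (forall x, #|[set y | e x y]%SET| <= D)%N ->
  exists c : T -> 'I_D.+1, forall x y, e x y -> c x != c y.
Proof.
move=> esym eirr edeg.
suff: forall s : seq T, exists c : T -> 'I_D.+1,
    forall x y, x \in s -> y \in s -> e x y -> c x != c y.
  by case/(_ (enum T)) => c Hc; exists c => x y; apply: Hc; rewrite mem_enum.
elim=> [|x s [c Hc]]; first by exists (fun _ => ord0).
set U := c @: [set y | e x y]%SET.
have : ~~ ([set: 'I_D.+1]%SET \subset U).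
  apply/negP => /subset_leq_card; rewrite cardsT card_ord => H.
  have := leq_trans H (leq_imset_card _ _); rewrite ltnNge.
  by rewrite (edeg x).
case/fintype.subsetPn => k _ Hk.
exists (fun y => if y == x then k else c y) => y z; rewrite !inE.
have key : forall z, e x z -> k != c z.
  move=> z' Hz'; apply: contraNneq Hk => ->; apply/imsetP; exists z' => //.
  by rewrite inE.
case: (eqVneq y x) => [->|Hy]; case: (eqVneq z x) => [->|Hz] /=.
- by rewrite eirr.
- by move=> _ _; apply: key.
- move=> _ _; rewrite esym => /key; by rewrite eq_sym.
- by move=> Ys Zs; apply: Hc.
Qed.



Section UF.
Variable T : Type.

Definition uf (w : set_system T) : Prop :=
  [/\ w setT, ~ w set0, (forall A B, w A -> w B -> w (A `&` B)),
      (forall A B, A `<=` B -> w A -> w B) & (forall A, w A \/ w (~` A))].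

Variable w : set_system T.
Hypothesis hw : uf w.

Lemma ufT : w setT. Proof. by case: hw. Qed.
Lemma uf0 : ~ w set0. Proof. by case: hw. Qed.
Lemma ufI A B : w A -> w B -> w (A `&` B). Proof. by case: hw => _ _ H _ _; apply: H. Qed.
Lemma ufS A B : A `<=` B -> w A -> w B. Proof. by case: hw => _ _ _ H _; apply: H. Qed.
Lemma ufC A : w A \/ w (~` A). Proof. by case: hw => _ _ _ _ H; apply: H. Qed.

Lemma uf_ne A : w A -> exists a, A a.
Proof.
move=> HA; apply: contrapT => H; apply: uf0; apply: ufS HA => a Aa; apply: H; by exists a.
Qed.

Lemma uf_notC A : w A -> ~ w (~` A).
Proof. by move=> HA HC; have [a []] := uf_ne (ufI HA HC). Qed.

Lemma uf_Cn A : ~ w A -> w (~` A).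
Proof. by case: (ufC A). Qed.

Lemma uf_filter : Filter w.
Proof. split; [exact: ufT|move=> A B; exact: ufI|move=> A B; exact: ufS]. Qed.

Lemma uf_all (I : finType) (P : I -> set T) :
  (forall i, w (P i)) -> w (fun a => forall i, P i a).
Proof. by move=> H; have := @filter_forall T I P w uf_filter H. Qed.

Lemma uf_ex (I : finType) (P : I -> set T) :
  w (fun a => exists i, P i a) -> exists i, w (P i).
Proof.
move=> H; apply: contrapT => Hn.
have H2 : forall i, w (~` P i) by move=> i; apply: uf_Cn => Hi; apply: Hn; exists i.
have [a [[i Hi] Ha]] := uf_ne (ufI H (uf_all H2)).
exact: (Ha i Hi).
Qed.

Lemma uf_ultra : UltraFilter w.
Proof.
split; first by split; [exact: uf0|exact: uf_filter].
move=> G GF sub; apply/funext => A; apply/propext; split; last exact: sub.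
move=> GA; apply: contrapT => nA; have := sub _ (uf_Cn nA) => GC.
have := @filterI _ G GF _ _ GA GC; rewrite setICr.
exact: filter_not_empty.
Qed.

End UF.
Arguments ufI {T w} hw {A B}.
Arguments ufS {T w} hw {A B}.
Arguments uf_ne {T w} hw {A}.
Arguments uf_notC {T w} hw {A}.
Arguments uf_Cn {T w} hw {A}.
Arguments uf_all {T w} hw {I P}.
Arguments uf_ex {T w} hw {I P}.
Arguments ufC {T w} hw A.

Lemma ultra_uf T (w : set_system T) : UltraFilter w -> uf w.
Proof.
move=> U; split.
- exact: filterT.
- exact: filter_not_empty.
- by move=> A B; apply: filterI.
- by move=> A B; apply: filterS.
- by move=> A; apply: in_ultra_setVsetC.
Qed.

Lemma uf_eq T (w1 w2 : set_system T) : uf w1 -> uf w2 ->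
  (forall B, w1 B -> w2 B) -> w1 = w2.
Proof.
move=> h1 h2 H; apply/funext => B; apply/propext; split; first exact: H.
move=> H2; apply: contrapT => n1; have := H _ (uf_Cn h1 n1); exact: (uf_notC h2 H2).
Qed.

Lemma uf_neq T (w1 w2 : set_system T) : uf w1 -> uf w2 -> w1 <> w2 ->
  exists B, w1 B /\ ~ w2 B.
Proof.
move=> h1 h2 H; apply: contrapT => Hn; apply: H; apply: uf_eq => // B HB.
by apply: contrapT => HB2; apply: Hn; exists B.
Qed.

Section ULim.
Variable T : Type.
Implicit Types (w : set_system T) (u v : T -> RR).

Definition islim w u (L : RR) : Prop :=
  forall eps : RR, 0 < eps -> w [set a | `|u a - L| < eps].

Lemma islim_ext w u v L : uf w -> w [set a | u a = v a] -> islim w u L -> islim w v L.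
Proof.
move=> hw Heq Hl eps He; apply: (ufS hw _ (ufI hw Heq (Hl eps He))) => a /= [E H]; by rewrite -E.
Qed.

Lemma islim_ge w u L c : uf w -> w [set a | c <= u a] -> islim w u L -> c <= L.
Proof.
move=> hw Hc Hl; rewrite leNgt; apply/negP => H.
have [a [Ha1 Ha2]] := uf_ne hw (ufI hw Hc (Hl (c - L) ltac:(by rewrite subr_gt0))).
move: Ha2 Ha1 => /= Ha2 Ha1.
have := ler_norm (u a - L); lra.
Qed.

Lemma islim_le w u L c : uf w -> w [set a | u a <= c] -> islim w u L -> L <= c.
Proof.
move=> hw Hc Hl; rewrite leNgt; apply/negP => H.
have [a [Ha1 Ha2]] := uf_ne hw (ufI hw Hc (Hl (L - c) ltac:(by rewrite subr_gt0))).
move: Ha2 Ha1 => /= Ha2 Ha1.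
have := ler_norm (- (u a - L)); rewrite normrN; lra.
Qed.

Lemma absP (x y e : RR) : x - e < y -> y < x + e -> `|y - x| < e.
Proof. by move=> H1 H2; rewrite ltr_norml; apply/andP; split; lra. Qed.

Lemma absP2 (x y e : RR) : `|y - x| < e -> x - e < y /\ y < x + e.
Proof. by rewrite ltr_norml => /andP[H1 H2]; split; lra. Qed.

Lemma islim_uniq w u L1 L2 : uf w -> islim w u L1 -> islim w u L2 -> L1 = L2.
Proof.
move=> hw H1 H2; apply: contrapT => Hne.
have He : 0 < `|L1 - L2| / 2 by rewrite divr_gt0 // normr_gt0 subr_eq0; apply/eqP.
have [a [/= /absP2 [A1 A2] /absP2 [B1 B2]]] := uf_ne hw (ufI hw (H1 _ He) (H2 _ He)).
move: A1 A2 B1 B2; case: (lerP 0 (L1 - L2)) => [/ger0_norm ->|/ltr0_norm ->]; lra.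
Qed.

Lemma islim_ex w u (M : RR) : uf w -> (forall a, 0 <= u a <= M) -> exists L, islim w u L.
Proof.
move=> hw hb; set S := [set c | w [set a | c <= u a]].
have hs : has_sup S.
  split; first by exists 0; apply: (ufS hw _ (ufT hw)) => a _ /=; case/andP: (hb a).
  exists M => c Sc; have [a /= Ha] := uf_ne hw Sc.
  by case/andP: (hb a) => _; apply: le_trans.
exists (sup S) => eps He.
have [c Sc Hc] := sup_adherent He hs.
have Hup : w [set a | u a < sup S + eps].
  apply: contrapT => Hn; have := uf_Cn hw Hn => HC.
  have : S (sup S + eps).
    by apply: (ufS hw _ HC) => a /= /negP; rewrite -leNgt.
  move/(sup_upper_bound hs); lra.
apply: (ufS hw _ (ufI hw Sc Hup)) => a /= [Ha1 Ha2]; apply: absP => //.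
exact: lt_le_trans Hc Ha1.
Qed.

Lemma islim_cst w (c : RR) : uf w -> islim w (fun _ => c) c.
Proof. by move=> hw eps He; apply: (ufS hw _ (ufT hw)) => a _ /=; rewrite subrr normr0. Qed.

Definition ulim w u : RR :=
  match pselect (exists L, islim w u L) with
  | left H => projT1 (cid H)
  | right _ => 0
  end.

Lemma ulimP w u : (exists L, islim w u L) -> islim w u (ulim w u).
Proof. by rewrite /ulim; case: pselect => // H _; case: (cid H). Qed.

End ULim.


Section Space.
Variables (V : nat -> finType) (adj : forall n, rel (V n)) (d : nat).
Hypothesis Hg : forall n : nat, [/\ simple_graph (@adj n), connected_graph (@adj n)
                & regular_graph (@adj n) d].

Lemma Hsym (n : nat) : symmetric (@adj n). Proof. by case: (Hg n) => [[]]. Qed.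
Lemma Hirr (n : nat) : irreflexive (@adj n). Proof. by case: (Hg n) => [[]]. Qed.
Lemma Hconn (n : nat) (x y : V n) : connect (@adj n) x y. Proof. by case: (Hg n) => _ [_ ->]. Qed.
Lemma Hreg (n : nat) (x : V n) : #|[set y | adj x y]| = d. Proof. by case: (Hg n) => _ _ ->. Qed.

Local Notation X := (cspace V).
Local Notation gd n := (gdist (@adj n)).

Definition runX (w : seq nat) (a : X) : X :=
  existT _ (tag a) (run (@adj (tag a)) w (tagged a)).

Definition push (w : seq nat) (om : set_system X) : set_system X :=
  fun B => om (runX w @^-1` B).

Definition bnd (om : set_system X) := uf om /\ forall a : X, ~ om [set a].

Lemma uf_push w om : uf om -> uf (push w om).
Proof.
move=> h; split.
- exact: ufT h.
- exact: uf0 h.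
- by move=> A B HA HB; exact: (ufI h HA HB).
- by move=> A B AB; apply: (ufS h) => a /AB.
- by move=> A; exact: (ufC h (runX w @^-1` A)).
Qed.

Lemma runX_cat w1 w2 a : runX (w1 ++ w2) a = runX w2 (runX w1 a).
Proof. by rewrite /runX run_cat. Qed.

Lemma push_cat w1 w2 om : push (w1 ++ w2) om = push w2 (push w1 om).
Proof.
apply/funext => B; rewrite /push; congr om; apply/funext => a /=.
by rewrite runX_cat.
Qed.

Lemma runX_nil a : runX [::] a = a. Proof. by case: a. Qed.

Lemma push_nil om : push [::] om = om.
Proof.
apply/funext => B; rewrite /push; congr om; apply/funext => a /=.
by rewrite runX_nil.
Qed.

Lemma push_ext (w1 w2 : seq nat) (om : set_system X) : uf om ->
  om [set a : X | run (@adj (tag a)) w1 (tagged a) = run (@adj (tag a)) w2 (tagged a)] ->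
  push w1 om = push w2 om.
Proof.
move=> h H; apply: uf_eq; [exact: uf_push|exact: uf_push|] => B HB.
apply: (ufS h _ (ufI h H HB)) => a /= [E HBa].
by rewrite /runX -E.
Qed.

Lemma runX_dist (w1 w2 : seq nat) (a : X) :
  (gd (tag a) (run (@adj (tag a)) w1 (tagged a)) (run (@adj (tag a)) w2 (tagged a))
     <= size w1 + size w2)%N.
Proof.
set n := tag a; set x := tagged a.
apply: leq_trans (gdist_tri (@Hconn n) _ x _) _.
rewrite gdist_sym; [|exact: Hsym|exact: Hconn].
by apply: leq_add; apply: run_dist.
Qed.

Lemma KL (w1 w2 : seq nat) (om : set_system X) : uf om -> push w1 om = push w2 om ->
  om [set a : X | run (@adj (tag a)) w1 (tagged a) = run (@adj (tag a)) w2 (tagged a)].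
Proof.
move=> h Hp; set R := (size w1 + size w2)%N.
set D := #|{: R.-tuple 'I_d.+1}|.
have Hc : forall n, exists c : V n -> 'I_D.+1, forall x y, crel (@adj n) R x y -> c x != c y.
  move=> n; apply: coloring.
  - exact: crel_sym (@Hsym n) (@Hconn n) R.
  - by move=> x; rewrite /crel eqxx.
  - move=> x; exact: crel_deg (@Hreg n) (@Hconn n) R x.
pose c n := projT1 (cid (Hc n)).
have cP n : forall x y, crel (@adj n) R x y -> c n x != c n y := projT2 (cid (Hc n)).
pose col (a : X) := c (tag a) (tagged a).
apply: contrapT => Hn; have HC := uf_Cn h Hn.
have : om (fun a => exists ij : 'I_D.+1 * 'I_D.+1,
   [/\ (~` [set a : X | run (@adj (tag a)) w1 (tagged a) = run (@adj (tag a)) w2 (tagged a)]) a,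
       col (runX w1 a) = ij.1 & col (runX w2 a) = ij.2]).
  by apply: (ufS h _ HC) => a Ha; exists (col (runX w1 a), col (runX w2 a)).
case/(uf_ex h) => [[i j] Hij].
have [a [Ha1 /= Ha2 Ha3]] := uf_ne h Hij.
have Hneq : i != j.
  rewrite -Ha2 -Ha3 /col /=; apply: cP; rewrite /crel runX_dist andbT.
  by apply/eqP.
have H1 : push w1 om [set b | col b = i].
  by apply: (ufS h _ Hij) => b [].
rewrite Hp in H1.
have H2 : push w2 om [set b | col b = j].
  by apply: (ufS h _ Hij) => b [].
have [b [/= Hb1 Hb2]] := uf_ne h (ufI h H1 H2).
by move: Hneq; rewrite -Hb1 -Hb2 eqxx.
Qed.

Lemma comp_not (om : set_system X) n : bnd om -> ~ om [set a : X | tag a = n].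
Proof.
move=> [h hs] Hc.
have : om (fun a : X => exists x : V n, [set existT _ n x] a).
  apply: (ufS h _ Hc) => -[m y] /= E; subst m; by exists y.
by case/(uf_ex h) => x /hs.
Qed.

Lemma comp_ge (om : set_system X) N : bnd om -> om [set a : X | (N <= tag a)%N].
Proof.
move=> hb; have h := hb.1; apply: contrapT => Hn; have HC := uf_Cn h Hn.
have : om (fun a : X => exists k : 'I_N, [set a : X | tag a = k] a).
  apply: (ufS h _ HC) => a /= Ha; have Ha' : (tag a < N)%N by rewrite ltnNge; apply/negP.
  by exists (Ordinal Ha').
by case/(uf_ex h) => k /(comp_not hb).
Qed.

Lemma bnd_push w om : bnd om -> bnd (push w om).
Proof.
move=> hb; split; first exact: uf_push hb.1.
move=> b Hb; apply: (comp_not (n := tag b) hb); apply: (ufS hb.1 _ Hb) => a /= <-.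
by [].
Qed.

Lemma boundary_bnd (om : set_system X) : boundary om <-> bnd om.
Proof.
split.
- move=> [[U] Hn]; split; first exact: ultra_uf.
  move=> a Ha; apply: (Hn a); apply/funext => A; apply/propext; split.
  + move=> HA; apply/principal_filterP.
    have [b [/= -> //]] := uf_ne (ultra_uf U) (ufI (ultra_uf U) Ha HA).
  + move/principal_filterP => Aa; apply: (ufS (ultra_uf U) _ Ha) => b /= ->.
    by [].
- move=> [h hs]; split; first by constructor; apply: uf_ultra.
  move=> a E; apply: (hs a); rewrite E; exact/principal_filterP.
Qed.

Lemma FrP r (p : pt V) : Fr adj r p <->
  [/\ bnd p.1, bnd p.2 & forall A B, p.1 A -> p.2 B -> exists n (x y : V n),
     [/\ A (existT _ n x), B (existT _ n y) & (gd n x y <= r)%N]].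
Proof.
split.
- move=> [[_ [_ Hc]] [/boundary_bnd b1 /boundary_bnd b2]]; split => // A B HA HB.
  have [q [[ab Hab Eq] HqA HqB]] := Hc A B HA HB.
  move: Hab => [n [x [y [E1 E2 Hd]]]].
  exists n, x, y; split => //.
  + by rewrite -Eq /= E1 in HqA; move/principal_filterP: HqA.
  + by rewrite -Eq /= E2 in HqB; move/principal_filterP: HqB.
- move=> [b1 b2 Hc]; split; last by split; apply/boundary_bnd.
  split; first by constructor; apply: uf_ultra b1.1.
  split; first by constructor; apply: uf_ultra b2.1.
  move=> A B HA HB; have [n [x [y [Ax By Hd]]]] := Hc A B HA HB.
  exists (principal_filter (existT _ n x : X), principal_filter (existT _ n y : X)).
  split; [|exact/principal_filterP|exact/principal_filterP].
  by exists (existT _ n x, existT _ n y) => //; exists n, x, y.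
Qed.

Lemma Fr_mono r r' p : (r <= r')%N -> Fr adj r p -> Fr adj r' p.
Proof.
move=> Hr /FrP [b1 b2 Hc]; apply/FrP; split => // A B HA HB.
have [n [x [y [Ax By Hd]]]] := Hc A B HA HB.
by exists n, x, y; split => //; apply: leq_trans Hr.
Qed.

Lemma Fr_sym r om1 om2 : Fr adj r (om1, om2) -> Fr adj r (om2, om1).
Proof.
move=> /FrP [/= b1 b2 Hc]; apply/FrP; split => //= A B HA HB.
have [n [x [y [Ax By Hd]]]] := Hc B A HB HA.
exists n, y, x; split => //; rewrite gdist_sym //; [exact: Hsym|exact: Hconn].
Qed.

Lemma Fr_push w om : bnd om -> Fr adj (size w) (om, push w om).
Proof.
move=> hb; apply/FrP; split => //=; first exact: bnd_push.
move=> A B HA HB; have [[n x] [/= Ha Hb]] := uf_ne hb.1 (ufI hb.1 HA HB).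
by exists n, x, (run (@adj n) w x); split => //; apply: run_dist.
Qed.

Lemma TL r (p : pt V) : Fr adj r p -> exists t : r.-tuple 'I_d.+1, p.2 = push (wv t) p.1.
Proof.
move=> Hf; have /FrP [b1 b2 Hc] := Hf.
apply: contrapT => Hn.
have H1 : forall t : r.-tuple 'I_d.+1, exists B, p.2 B /\ ~ push (wv t) p.1 B.
  move=> t; apply: uf_neq; [exact: b2.1|exact: uf_push b1.1|].
  by move=> E; apply: Hn; exists t.
have [Bf HB] := choice H1.
have HA : p.1 (fun a => forall t, (~` (runX (wv t) @^-1` Bf t)) a).
  by apply: (uf_all b1.1) => t; apply: (uf_Cn b1.1); exact: (HB t).2.
have HBB : p.2 (fun b => forall t, Bf t b).
  by apply: (uf_all b2.1) => t; exact: (HB t).1.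
have [n [x [y [Ax By Hd]]]] := Hc _ _ HA HBB.
have [t Ht] := close_word' (@Hreg n) (@Hconn n) Hd.
apply: (Ax t); rewrite /runX /= Ht; exact: By.
Qed.

Lemma Ginf_Fr p : Ginf adj p -> exists r, Fr adj r p.
Proof. by case=> r _ H; exists r. Qed.

Lemma Fr_Ginf r p : Fr adj r p -> Ginf adj p.
Proof. by move=> H; exists r. Qed.

Lemma Ginf_word (p : pt V) : Ginf adj p ->
  [/\ bnd p.1, bnd p.2 & exists w, p.2 = push w p.1].
Proof.
case/Ginf_Fr => r Hf; have /FrP [b1 b2 _] := Hf; split => //.
by have [t Ht] := TL Hf; exists (wv t).
Qed.

Lemma Ginf_sym om1 om2 : Ginf adj (om1, om2) -> Ginf adj (om2, om1).
Proof. by case/Ginf_Fr => r /Fr_sym H; exists r. Qed.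

End Space.


Section HDef.
Variables (V : nat -> finType) (adj : forall n, rel (V n)) (d : nat).
Hypothesis Hg : forall n : nat, [/\ simple_graph (@adj n), connected_graph (@adj n)
                & regular_graph (@adj n) d].
Variables (rhom rhop : RR -> RR) (K : forall n, V n -> V n -> RR).
Hypothesis Hm : nondecr_to_infty rhom.
Hypothesis Hp : nondecr_to_infty rhop.
Hypothesis HK0 : forall n (x y : V n), 0 <= K x y /\ K x y = K y x.
Hypothesis HKd : forall n (x : V n), K x x = 0.
Hypothesis HKb : forall n (x y : V n),
      rhom (gdist (@adj n) x y)%:R <= K x y /\ K x y <= rhop (gdist (@adj n) x y)%:R.

Local Notation X := (cspace V).

Definition Kw (w : seq nat) (a : X) : RR :=
  K (tagged a) (run (@adj (tag a)) w (tagged a)).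

Definition hf (p : pt V) : RR :=
  match pselect (exists w, p.2 = push adj w p.1) with
  | left H => ulim p.1 (Kw (projT1 (cid H)))
  | right _ => 0
  end.

Lemma Kw_bnd w a : 0 <= Kw w a <= rhop (size w)%:R.
Proof.
rewrite /Kw; have [H0 _] := HK0 (tagged a) (run (@adj (tag a)) w (tagged a)).
rewrite H0 /=; have [_ H1] := HKb (tagged a) (run (@adj (tag a)) w (tagged a)).
apply: le_trans H1 _; case: Hp => _ Hmon _; apply: Hmon => //.
by rewrite ler_nat run_dist.
Qed.

Lemma Kw_lim w (om : set_system X) : uf om -> exists L, islim om (Kw w) L.
Proof. by move=> h; apply: (islim_ex h (M := rhop (size w)%:R)); apply: Kw_bnd. Qed.

Lemma hE (p : pt V) w : uf p.1 -> p.2 = push adj w p.1 -> islim p.1 (Kw w) (hf p).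
Proof.
move=> h E; rewrite /hf; case: pselect => [H|H]; last by exfalso; apply: H; exists w.
case: (cid H) => w' E' /=.
have Hl := ulimP (Kw_lim w' (om := p.1) h).
apply: (islim_ext h _ Hl).
have := KL Hg h (etrans (esym E') E); apply: (ufS h) => a /= Ea.
by rewrite /Kw Ea.
Qed.

Lemma h_nonneg p : Ginf adj p -> 0 <= hf p.
Proof.
case/(Ginf_word Hg) => b1 _ [w E].
apply: (islim_ge b1.1 _ (hE b1.1 E)); apply: (ufS b1.1 _ (ufT b1.1)) => a _ /=.
by case/andP: (Kw_bnd w a).
Qed.

Lemma h_diag (om : set_system X) : bnd om -> hf (om, om) = 0.
Proof.
move=> hb; have E : (om, om).2 = push adj [::] (om, om).1 by rewrite /= push_nil.
have := hE (p := (om, om)) hb.1 E => Hl; apply: (islim_uniq hb.1 Hl).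
apply: (islim_ext hb.1 _ (islim_cst 0 hb.1)); apply: (ufS hb.1 _ (ufT hb.1)) => a _ /=.
by rewrite /Kw /= HKd.
Qed.

Lemma h_sym om1 om2 : Ginf adj (om1, om2) -> hf (om1, om2) = hf (om2, om1).
Proof.
move=> HG; have [/= b1 b2 [u Eu]] := Ginf_word Hg HG.
have [/= _ _ [v Ev]] := Ginf_word Hg (Ginf_sym Hg HG).
have L1 := hE (p := (om1, om2)) b1.1 Eu.
have L2 := hE (p := (om2, om1)) b2.1 Ev.
rewrite /= in L1 L2.
have L2' : islim om1 (fun a => Kw v (runX adj u a)) (hf (om2, om1)).
  by move=> eps He; have := L2 eps He; rewrite Eu.
apply: (islim_uniq b1.1 L1); apply: (islim_ext b1.1 _ L2').
have E : push adj (u ++ v) om1 = push adj [::] om1 by rewrite push_cat -Eu -Ev push_nil.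
have := KL Hg b1.1 E; apply: (ufS b1.1) => a /= Ea.
rewrite /Kw /= -(run_cat (@adj (tag a)) u v) Ea /=.
by case: (HK0 (tagged a) (run (@adj (tag a)) u (tagged a))) => _ ->.
Qed.

End HDef.


Lemma open_ball (O : set RR) (L : RR) : open O -> O L ->
  exists2 e : RR, 0 < e & forall y, `|L - y| < e -> O y.
Proof.
move=> oO OL; have : nbhs L O by apply: open_nbhs_nbhs; split.
by case/nbhs_ballP => e He HB; exists e => // y Hy; apply: HB.
Qed.

Section Cont.
Variables (V : nat -> finType) (adj : forall n, rel (V n)) (d : nat).
Hypothesis Hg : forall n : nat, [/\ simple_graph (@adj n), connected_graph (@adj n)
                & regular_graph (@adj n) d].
Variables (rhom rhop : RR -> RR) (K : forall n, V n -> V n -> RR).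
Hypothesis Hm : nondecr_to_infty rhom.
Hypothesis Hp : nondecr_to_infty rhop.
Hypothesis HK0 : forall n (x y : V n), 0 <= K x y /\ K x y = K y x.
Hypothesis HKd : forall n (x : V n), K x x = 0.
Hypothesis HKb : forall n (x y : V n),
      rhom (gdist (@adj n) x y)%:R <= K x y /\ K x y <= rhop (gdist (@adj n) x y)%:R.

Local Notation X := (cspace V).
Local Notation h := (hf adj K).

Lemma h_cont r (p : pt V) (O : set RR) : open O -> Fr adj r p -> O (h p) ->
  exists A B, [/\ p.1 A, p.2 B & forall q, Fr adj r q -> q.1 A -> q.2 B -> O (h q)].
Proof.
move=> oO Hf Op; have /FrP [b1 b2 _] := Hf.
have h1 := b1.1; have h2 := b2.1.
have [t0 Et0] := TL Hg Hf; set u := wv t0.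
have Lp := hE Hg Hp HK0 HKb h1 Et0.
have [eps He Heps] := open_ball oO Op.
have He2 : 0 < eps / 2 by rewrite divr_gt0.
have HA0 := Lp _ He2.
have Hch : forall t : r.-tuple 'I_d.+1, exists AB : set X * set X,
   [/\ p.1 AB.1, p.2 AB.2 & forall om', uf om' -> om' AB.1 -> push adj (wv t) om' AB.2 ->
       om' [set a : X | run (@adj (tag a)) (wv t) (tagged a) = run (@adj (tag a)) u (tagged a)]].
  move=> t; case: (pselect (push adj (wv t) p.1 = p.2)) => [E|NE].
  - exists ([set a : X | run (@adj (tag a)) (wv t) (tagged a) = run (@adj (tag a)) u (tagged a)], setT).
    split => //; first by apply: (KL Hg h1); rewrite E.
    exact: ufT h2.
  - have [B [HB NB]] := uf_neq h2 (uf_push adj (wv t) h1) (nesym NE).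
    exists (~` (runX adj (wv t) @^-1` B), B); split => //=; first exact: (uf_Cn h1 NB).
    by move=> om' hom H1 H2; exfalso; exact: (uf_notC hom H2 H1).
have [f Hf'] := choice Hch.
exists ([set a : X | `|Kw adj K u a - h p| < eps / 2] `&` (fun a => forall t, (f t).1 a)),
       (fun b => forall t, (f t).2 b).
split.
- apply: (ufI h1 HA0); apply: (uf_all h1) => t; by case: (Hf' t).
- apply: (uf_all h2) => t; by case: (Hf' t).
move=> q Hq qA qB; have /FrP [c1 c2 _] := Hq.
have [t Et] := TL Hg Hq.
have qA0 : q.1 [set a : X | `|Kw adj K u a - h p| < eps / 2] by apply: (ufS c1.1 _ qA) => a [].
have qAt : q.1 (f t).1 by apply: (ufS c1.1 _ qA) => a [_ /(_ t)].
have qBt : q.2 (f t).2 by apply: (ufS c2.1 _ qB) => b /(_ t).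
case: (Hf' t) => _ _ /(_ q.1 c1.1 qAt) H; rewrite Et in qBt; have := H qBt => Hagree.
have Eq : q.2 = push adj u q.1 by rewrite Et; apply: push_ext c1.1 Hagree.
have Lq := hE Hg Hp HK0 HKb c1.1 Eq.
have Hle : h q <= h p + eps / 2.
  apply: (islim_le c1.1 _ Lq); apply: (ufS c1.1 _ qA0) => a /= /absP2 [_ ?]; lra.
have Hge : h p - eps / 2 <= h q.
  apply: (islim_ge c1.1 _ Lq); apply: (ufS c1.1 _ qA0) => a /= /absP2 [? _]; lra.
apply: Heps; rewrite distrC; apply: absP; lra.
Qed.

Lemma h_continuous : Ginf_continuous adj h.
Proof.
move=> O oO; split; first by move=> p [].
move=> r; split; first by move=> p [].
move=> p [[Gp Op] Fp].
have [A [B [HA HB HAB]]] := h_cont oO Fp Op.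
exists A, B; split => // q Fq qA qB; split => //; split; last exact: HAB.
exact: Fr_Ginf Fq.
Qed.

End Cont.


Lemma cbound (C : set RR) : compact C -> exists M : RR, forall x, C x -> x <= M.
Proof.
move=> cC; have [M0 [_ HM0]] := @compact_bounded RR RR^o C cC.
exists (M0 + 1) => x Cx.
have := HM0 (M0 + 1) ltac:(lra) x Cx => /= H.
exact: le_trans (ler_norm x) H.
Qed.

Lemma cclosed (C : set RR) : compact C -> open (~` C).
Proof. move=> cC; apply: closed_openC; apply: compact_closed => //; exact: (@norm_hausdorff _ RR^o). Qed.

Lemma In_mem (T : eqType) (x : T) (s : seq T) : x \in s -> List.In x s.
Proof. elim: s => //= y s IH; rewrite inE => /orP [/eqP ->|/IH]; [by left|by right]. Qed.

Lemma In_flatten (A I : Type) (l : seq A) (F : A -> seq I) a i :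
  List.In a l -> List.In i (F a) -> List.In i (flatten (map F l)).
Proof.
elim: l => //= b l IH [<-|Ha] Hi.
- elim: (F b) Hi => //= c s IHs [->|H]; [by left|by right; apply: IHs].
- have := IH Ha Hi; elim: (F b) => //= c s IHs H; by right; apply: IHs.
Qed.

Section Proper.
Variables (V : nat -> finType) (adj : forall n, rel (V n)) (d : nat).
Hypothesis Hg : forall n : nat, [/\ simple_graph (@adj n), connected_graph (@adj n)
                & regular_graph (@adj n) d].
Variables (rhom rhop : RR -> RR) (K : forall n, V n -> V n -> RR).
Hypothesis Hm : nondecr_to_infty rhom.
Hypothesis Hp : nondecr_to_infty rhop.
Hypothesis HK0 : forall n (x y : V n), 0 <= K x y /\ K x y = K y x.
Hypothesis HKd : forall n (x : V n), K x x = 0.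
Hypothesis HKb : forall n (x y : V n),
      rhom (gdist (@adj n) x y)%:R <= K x y /\ K x y <= rhop (gdist (@adj n) x y)%:R.

Local Notation X := (cspace V).
Local Notation h := (hf adj K).

Lemma bound_R (M : RR) : exists R : nat, forall k : nat, (R <= k)%N -> M + 1 <= rhom k%:R.
Proof.
case: Hm => _ Hmon HT.
have [T' HT'] := HT (M + 1).
exists (Num.Def.archi_bound `|T'|) => k Hk; apply: HT'.
have H1 := archi_boundP (normr_ge0 T').
apply: le_trans (ler_norm T') _; apply: ltW; apply: lt_le_trans H1 _.
by rewrite ler_nat.
Qed.

Lemma S_word (M : RR) (R : nat) (HR : forall k : nat, (R <= k)%N -> M + 1 <= rhom k%:R)
  (p : pt V) : Ginf adj p -> h p <= M -> exists t : R.-tuple 'I_d.+1, p.2 = push adj (wv t) p.1.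
Proof.
move=> Gp hM; have [b1 b2 [u Eu]] := Ginf_word Hg Gp.
have h1 := b1.1.
pose g (a : X) := gdist (@adj (tag a)) (tagged a) (run (@adj (tag a)) u (tagged a)).
have : p.1 (fun a => exists k : 'I_(size u).+1, [set a : X | g a = k] a).
  apply: (ufS h1 _ (ufT h1)) => a _.
  have Ha : (g a < (size u).+1)%N by rewrite ltnS; apply: run_dist.
  by exists (Ordinal Ha).
case/(uf_ex h1) => k Hk.
have Hl := hE Hg Hp HK0 HKb h1 Eu.
have HkR : (k < R)%N.
  rewrite ltnNge; apply/negP => HRk.
  have : M + 1 <= h p.
    apply: (islim_ge h1 _ Hl); apply: (ufS h1 _ Hk) => a /= Ha.
    apply: le_trans (HR k HRk) _; rewrite /Kw -Ha.
    by case: (HKb (tagged a) (run (@adj (tag a)) u (tagged a))).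
  lra.
have : p.1 (fun a => exists t : R.-tuple 'I_d.+1,
    [set a : X | run (@adj (tag a)) (wv t) (tagged a) = run (@adj (tag a)) u (tagged a)] a).
  apply: (ufS h1 _ Hk) => a /= Ha.
  have Hd : (g a <= R)%N by rewrite Ha ltnW.
  have [t Ht] := close_word' (@Hreg _ _ _ Hg (tag a)) (@Hconn _ _ _ Hg (tag a)) Hd.
  by exists t.
case/(uf_ex h1) => t Ht; exists t; rewrite Eu.
by apply: esym; apply: push_ext h1 Ht.
Qed.

Lemma cover_t (C : set RR) (cC : compact C) (R : nat) (t : R.-tuple 'I_d.+1)
  (I : Type) (U : I -> set (pt V)) : (forall i, Ginf_open adj (U i)) ->
  (Ginf adj `&` h @^-1` C) `<=` \bigcup_(i in [set: I]) U i ->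
  exists s : seq I, forall p, (Ginf adj `&` h @^-1` C) p -> p.2 = push adj (wv t) p.1 ->
    exists i, List.In i s /\ U i p.
Proof.
move=> HU Hcov.
pose St p := (Ginf adj `&` h @^-1` C) p /\ p.2 = push adj (wv t) p.1.
have StFr : forall p, St p -> Fr adj R p.
  move=> [om1 om2] [[Gp _] /= E]; have [/= b1 _ _] := Ginf_word Hg Gp; rewrite E.
  by have := Fr_push adj (wv t) b1; rewrite size_wv.
have StB : forall om, St (om, push adj (wv t) om) -> bnd om.
  by move=> om [[Gp _] _]; case: (Ginf_word Hg Gp).
apply: contrapT => Hn.
have Hch : forall q : {p | St p}, exists iAB : I * set X * set X,
   [/\ U iAB.1.1 (sval q), (sval q).1 iAB.1.2, (sval q).2 iAB.2 &
      forall q', Fr adj R q' -> q'.1 iAB.1.2 -> q'.2 iAB.2 -> U iAB.1.1 q'].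
  move=> [p Hpp]; have [i _ Hi] := Hcov p Hpp.1.
  have [_ Hro] := HU i; have [_ Hr] := Hro R.
  have [A [B [HA HB HAB]]] := Hr p (conj Hi (StFr p Hpp)).
  exists (i, A, B); split => // q' Fq qA qB; by case: (HAB q' Fq qA qB).
have [g Hgg] := choice Hch.
pose Cq (q : {p | St p}) : set X := (g q).1.2 `&` (runX adj (wv t) @^-1` (g q).2).
pose FF : set_system X := fun D => exists L : list {p | St p},
   forall om, St (om, push adj (wv t) om) -> (forall q, List.In q L -> ~ om (Cq q)) -> om D.
have FFP : ProperFilter FF.
  split.
  - move=> [L HL]; apply: Hn; exists (List.map (fun q => (g q).1.1) L).
    move=> [om1 om2] Sp /= E; subst om2.
    have HS : St (om1, push adj (wv t) om1) by split.
    have : exists q, List.In q L /\ om1 (Cq q).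
      apply: contrapT => Hne; apply: (uf0 (proj1 (StB _ HS))); apply: HL => // q Hq Hc.
      by apply: Hne; exists q.
    case=> q [Hq HqC]; have hom := (proj1 (StB _ HS)).
    have HqA := ufS hom (fun a => @proj1 _ _) HqC.
    have HqB := ufS hom (fun a => @proj2 _ _) HqC.
    exists (g q).1.1; split; first exact: List.in_map.
    case: (Hgg q) => _ _ _; apply => //=; exact: StFr.
  - split.
    + by exists [::] => om Hs _; exact: (ufT (proj1 (StB _ Hs))).
    + move=> A B [L1 H1] [L2 H2]; exists (L1 ++ L2)%list => om Hs Hq; apply: (ufI (proj1 (StB _ Hs))).
      * apply: H1 => // q Hq'; apply: Hq; apply: List.in_or_app; by left.
      * apply: H2 => // q Hq'; apply: Hq; apply: List.in_or_app; by right.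
    + move=> A B AB [L HL]; exists L => om Hs Hq; exact: (ufS (proj1 (StB _ Hs)) AB (HL om Hs Hq)).
have [G [GU FG]] := ultraFilterLemma FFP.
have hG := ultra_uf GU.
have bG : bnd G.
  split => // a Ha.
  have : FF (~` [set a]).
    by exists [::] => om Hs _; apply: (uf_Cn (proj1 (StB _ Hs))); exact: ((proj2 (StB _ Hs)) a).
  move/FG => HC; exact: (uf_notC hG Ha HC).
pose ps := (G, push adj (wv t) G).
have Fps : Fr adj R ps by have := Fr_push adj (wv t) bG; rewrite size_wv.
have Gps := Fr_Ginf Fps.
have Cps : C (h ps).
  apply: contrapT => nC.
  have [A [B [HA HB HAB]]] := h_cont Hg Hp HK0 HKb (cclosed cC) Fps nC.
  have HD : G (A `&` (runX adj (wv t) @^-1` B)) by exact: (ufI hG HA HB).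
  have : FF (~` (A `&` (runX adj (wv t) @^-1` B))).
    exists [::] => om Hs _; apply: (uf_Cn (proj1 (StB _ Hs))) => HDom.
    have Fo : Fr adj R (om, push adj (wv t) om) := StFr _ Hs.
    have hom := (proj1 (StB _ Hs)).
    have := HAB _ Fo (ufS hom (fun a => @proj1 _ _) HDom) (ufS hom (fun a => @proj2 _ _) HDom).
    by apply; case: Hs => [[_ ?] _].
  move/FG => HC; exact: (uf_notC hG HD HC).
have Sps : St ps by split; [split|].
pose qs := exist St ps Sps.
have HCq : G (Cq qs) by case: (Hgg qs) => _ HA HB _; exact: (ufI hG HA HB).
have : FF (~` Cq qs).
  exists [:: qs] => om Hs Hq; apply: (uf_Cn (proj1 (StB _ Hs))); apply: Hq; by left.
move/FG => HC; exact: (uf_notC hG HCq HC).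
Qed.

Lemma h_proper : Ginf_proper adj h.
Proof.
move=> C cC; split; first by move=> p [].
move=> I U HU Hcov.
have [M HM] := cbound cC.
have [R HR] := bound_R M.
have Hch : forall t : R.-tuple 'I_d.+1, exists s : seq I, forall p,
    (Ginf adj `&` h @^-1` C) p -> p.2 = push adj (wv t) p.1 ->
    exists i, List.In i s /\ U i p.
  by move=> t; exact: (cover_t cC t HU Hcov).
have [f Hf] := choice Hch.
exists (flatten (map f (enum {: R.-tuple 'I_d.+1}))).
move=> p Sp; have [t Et] := S_word HR Sp.1 (HM _ Sp.2).
have [i [Hi Ui]] := Hf t p Sp Et.
exists i => //=; apply: In_flatten Hi; apply: In_mem; by rewrite mem_enum.
Qed.

End Proper.


Lemma ReMR (x : complex RR) (c : RR) : complex.Re (x * real_complex RR c) = complex.Re x * c.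
Proof. case: x => a b /=; ring. Qed.
Lemma ImMR (x : complex RR) (c : RR) : complex.Im (x * real_complex RR c) = complex.Im x * c.
Proof. case: x => a b /=; ring. Qed.
Lemma Im_anti (x y : complex RR) : complex.Im (y * conjc x) = - complex.Im (x * conjc y).
Proof. case: x => a b; case: y => c e /=; ring. Qed.
Lemma Re_sum (I : Type) (r : seq I) (F : I -> complex RR) :
  complex.Re (\sum_(i <- r) F i) = \sum_(i <- r) complex.Re (F i).
Proof.
elim: r => [|i r IH]; first by rewrite !big_nil.
by rewrite !big_cons -IH; case: (F i); case: (\sum_(j <- r) F j).
Qed.
Lemma Im_sum (I : Type) (r : seq I) (F : I -> complex RR) :
  complex.Im (\sum_(i <- r) F i) = \sum_(i <- r) complex.Im (F i).
Proof.
elim: r => [|i r IH]; first by rewrite !big_nil.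
by rewrite !big_cons -IH; case: (F i); case: (\sum_(j <- r) F j).
Qed.

Section CND.
Variables (V : nat -> finType) (adj : forall n, rel (V n)) (d : nat).
Hypothesis Hg : forall n : nat, [/\ simple_graph (@adj n), connected_graph (@adj n)
                & regular_graph (@adj n) d].
Variables (rhom rhop : RR -> RR) (K : forall n, V n -> V n -> RR) (Rn : nat -> RR).
Hypothesis Hm : nondecr_to_infty rhom.
Hypothesis Hp : nondecr_to_infty rhop.
Hypothesis HRn : forall M : RR, exists N, forall n, (N <= n)%N -> M <= Rn n.
Hypothesis HK0 : forall n (x y : V n), 0 <= K x y /\ K x y = K y x.
Hypothesis HKd : forall n (x : V n), K x x = 0.
Hypothesis HKb : forall n (x y : V n),
      rhom (gdist (@adj n) x y)%:R <= K x y /\ K x y <= rhop (gdist (@adj n) x y)%:R.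
Hypothesis Hcnd : forall n (m : nat) (x : 'I_m -> V n) (z : 'I_m -> complex RR),
      injective x ->
      (forall i j, (gdist (@adj n) (x i) (x j))%:R <= Rn n) ->
      \sum_(i < m) z i = 0 ->
      \sum_(i < m) \sum_(j < m)
          z i * conjc (z j) * real_complex RR (K (x i) (x j)) <= 0.

Local Notation X := (cspace V).
Local Notation h := (hf adj K).

Lemma h_cnd (m : nat) (om : 'I_m -> set_system X) (z : 'I_m -> complex RR) :
  injective om -> (forall i, boundary (om i)) -> (forall i j, Ginf adj (om i, om j)) ->
  \sum_(i < m) z i = 0 ->
  \sum_(i < m) \sum_(j < m) z i * conjc (z j) * real_complex RR (h (om i, om j)) <= 0.
Proof.
case: m om z => [|m] om z Hinj Hb HG Hz; first by rewrite big_ord0 lexx.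
pose w := om ord0.
have bw : bnd w by apply/boundary_bnd; exact: Hb.
have hw := bw.1.
have Hu : forall i, exists u, om i = push adj u w.
  by move=> i; have [_ _ [u Eu]] := Ginf_word Hg (HG ord0 i); exists u.
have [u Hu'] := choice Hu.
pose f (i j : 'I_m.+1) (a : X) :=
  K (run (@adj (tag a)) (u i) (tagged a)) (run (@adj (tag a)) (u j) (tagged a)).
have Lij : forall i j, islim w (f i j) (h (om i, om j)).
  move=> i j; have [bi _ [v Ev]] := Ginf_word Hg (HG i j).
  have L := hE Hg Hp HK0 HKb (p := (om i, om j)) bi.1 Ev.
  have gen : forall c, islim (om i) (Kw adj K v) c ->
      islim w (fun a => Kw adj K v (runX adj (u i) a)) c.
    by rewrite (Hu' i).
  apply: (islim_ext hw _ (gen _ L)).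
  have E : push adj (u i ++ v) w = push adj (u j) w by rewrite push_cat -Hu' -Ev -Hu'.
  have := KL Hg hw E; apply: (ufS hw) => a /= Ea.
  by rewrite /Kw /f /= -(run_cat (@adj (tag a)) (u i) v) Ea.
have Hdist : forall i j : 'I_m.+1, i != j -> w [set a : X |
    run (@adj (tag a)) (u i) (tagged a) != run (@adj (tag a)) (u j) (tagged a)].
  move=> i j Hij; apply: contrapT => Hn; have := uf_Cn hw Hn => HC.
  have : w [set a : X | run (@adj (tag a)) (u i) (tagged a) = run (@adj (tag a)) (u j) (tagged a)].
    by apply: (ufS hw _ HC) => a /= /negP; rewrite negbK => /eqP.
  move/(push_ext hw); rewrite -!Hu' => /Hinj E.
  by move: Hij; rewrite E eqxx.
have Hsym : forall i j, h (om i, om j) = h (om j, om i).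
  by move=> i j; apply: h_sym; [exact: Hg|exact: Hp|exact: HK0|exact: HKb|exact: HG].
pose B := (\max_(i < m.+1) size (u i))%N.
have [N HN] := HRn (B + B)%:R.
pose rho (i j : 'I_m.+1) := complex.Re (z i * conjc (z j)).
pose iota (i j : 'I_m.+1) := complex.Im (z i * conjc (z j)).
pose H i j := h (om i, om j).
set S := \sum_(i < m.+1) _.
have ReS : complex.Re S = \sum_(i < m.+1) \sum_(j < m.+1) H i j * rho i j.
  rewrite /S Re_sum; apply: eq_bigr => i _; rewrite Re_sum; apply: eq_bigr => j _.
  by rewrite ReMR mulrC.
have ImS : complex.Im S = \sum_(i < m.+1) \sum_(j < m.+1) H i j * iota i j.
  rewrite /S Im_sum; apply: eq_bigr => i _; rewrite Im_sum; apply: eq_bigr => j _.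
  by rewrite ImMR mulrC.
have Im0 : complex.Im S = 0.
  rewrite ImS; set Y := \sum_(i < m.+1) _.
  have : Y = - Y.
    rewrite {1}/Y exchange_big /= /Y -sumrN; apply: eq_bigr => i _.
    rewrite -sumrN; apply: eq_bigr => j _.
    by rewrite /H Hsym /iota Im_anti mulrN.
  lra.
have ReS0 : complex.Re S <= 0.
  rewrite leNgt; apply/negP => Spos.
  pose P := \sum_(i < m.+1) \sum_(j < m.+1) `|rho i j|.
  have P0 : 0 <= P by apply: sumr_ge0 => i _; apply: sumr_ge0 => j _; exact: normr_ge0.
  pose eps := complex.Re S / (P + 1).
  have Heps : 0 < eps by rewrite divr_gt0 //; lra.
  have G1 : w [set a : X | (N <= tag a)%N] := comp_ge N bw.
  have G2 : w (fun a : X => forall ij : 'I_m.+1 * 'I_m.+1, ij.1 != ij.2 ->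
      run (@adj (tag a)) (u ij.1) (tagged a) != run (@adj (tag a)) (u ij.2) (tagged a)).
    apply: (uf_all hw) => -[i j] /=; case: (eqVneq i j) => [->|Hij].
    - by apply: (ufS hw _ (ufT hw)) => a _; rewrite eqxx.
    - by apply: (ufS hw _ (Hdist i j Hij)) => a Ha _.
  have G3 : w (fun a : X => forall ij : 'I_m.+1 * 'I_m.+1,
      `|f ij.1 ij.2 a - H ij.1 ij.2| < eps).
    by apply: (uf_all hw) => -[i j]; exact: (Lij i j eps Heps).
  have [a [[Ga1 Ga2] Ga3]] := uf_ne hw (ufI hw (ufI hw G1 G2) G3).
  pose n := tag a.
  pose xs (i : 'I_m.+1) := run (@adj n) (u i) (tagged a).
  have Hinjx : injective xs.
    move=> i j Eij; apply/eqP; apply: contraT => Hij.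
    by have := Ga2 (i, j) Hij; rewrite /= -/(xs i) -/(xs j) Eij eqxx.
  have Hd : forall i j, (gdist (@adj n) (xs i) (xs j))%:R <= Rn n.
    move=> i j; apply: le_trans (HN n Ga1); rewrite ler_nat.
    apply: leq_trans (runX_dist Hg (u i) (u j) a) _.
    by apply: leq_add; apply: leq_bigmax.
  have T0 := Hcnd Hinjx Hd Hz.
  move: T0; rewrite lecE => /andP [_ ReT].
  have ReT' : \sum_(i < m.+1) \sum_(j < m.+1) K (xs i) (xs j) * rho i j <= 0.
    move: ReT; rewrite Re_sum /=; congr (_ <= _); apply: eq_bigr => i _.
    rewrite Re_sum; apply: eq_bigr => j _; by rewrite ReMR mulrC.
  have Hle : \sum_(i < m.+1) \sum_(j < m.+1) H i j * rho i j <=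
      \sum_(i < m.+1) \sum_(j < m.+1) (K (xs i) (xs j) * rho i j + eps * `|rho i j|).
    apply: ler_sum => i _; apply: ler_sum => j _.
    have := Ga3 (i, j) => /= Hij.
    have E1 : (H i j - K (xs i) (xs j)) * rho i j <= eps * `|rho i j|.
      apply: le_trans (ler_norm _) _; rewrite normrM; apply: ler_wpM2r; first exact: normr_ge0.
      by rewrite distrC; apply: ltW.
    rewrite mulrBl in E1; lra.
  have Esplit : \sum_(i < m.+1) \sum_(j < m.+1) (K (xs i) (xs j) * rho i j + eps * `|rho i j|)
     = \sum_(i < m.+1) \sum_(j < m.+1) K (xs i) (xs j) * rho i j + eps * P.
    rewrite /P mulr_sumr -big_split; apply: eq_bigr => i _.
    by rewrite mulr_sumr big_split.
  have Ee : eps * (P + 1) = complex.Re S by rewrite /eps divfK //; apply: lt0r_neq0; lra.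
  rewrite mulrDr mulr1 in Ee.
  rewrite -ReS in Hle; rewrite Esplit in Hle.
  have : complex.Re S < complex.Re S by lra.
  by rewrite ltxx.
rewrite lecE Im0 /= eqxx /=; exact: ReS0.
Qed.

End CND.


Theorem lemma5p3 (V : nat -> finType) (adj : forall n, rel (V n)) (d : nat) :
  (3 <= d)%N ->
  (forall n, [/\ simple_graph (adj n), connected_graph (adj n)
                & regular_graph (adj n) d]) ->
  asymp_embeddable adj ->
  boundary_haagerup adj.
Proof.
move=> _ Hg [rhom [rhop [K [Rn [Hm [Hp [HR0 [HRn [HK0 [HKd [HKb Hcnd]]]]]]]]]]].
exists (hf adj K); split; first by move=> p; exact: (h_nonneg Hg Hp HK0 HKb).
split; first exact: (h_continuous Hg Hp HK0 HKb).
split; first exact: (h_proper Hg Hm Hp HK0 HKb).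
split; first by move=> w /boundary_bnd bw; exact: (h_diag Hg Hp HK0 HKd HKb bw).
split; first by move=> w e; exact: (h_sym Hg Hp HK0 HKb).
move=> m om z; exact: (h_cnd Hg Hp HRn HK0 HKb Hcnd).
Qed.
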